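(* The pair of graded graphs $(\mathbf{Motz}_\bullet,\mathbf{U},\mathbf{V})$ is $\phi$-diagonal dual, i.e. $\mathbf{V}^\star\mathbf{U}-\mathbf{U}\mathbf{V}^\star=\phi$, for the linear map $\phi$ defined by $$\phi(u)=\big(2+\#\{i\in[|u|-1] : u_i\ne u_{i+1}\}\big)\,u$$ for every $u\in\mathbf{Motz}$.
   Context: $\mathbb{K}$ is a field of characteristic zero. $\mathbf{Motz}$ is the set of all nonempty words $u=u_1\cdots u_n$ of nonnegative integers with $u_1=u_n=0$ and $|u_{i+1}-u_i|\le1$ for all $i$ (the elements of the operad of Motzkin paths, generated by $00$ and $010$). $\mathbf{Motz}_\bullet$ is this set graded by the degree $\#\{i\in[n-1] : u_{i+1}\ge u_i\}$ (number of flat and up steps). The prefix graph and twisted prefix graph of this operad are given by the linear maps on $\mathbb{K}\langle\mathbf{Motz}\rangle$ (basis: these words) $$\mathbf{U}(u)=\sum_{i\in[|u|]}\big(u_1\cdots u_i\,u_i\,u_{i+1}\cdots u_{|u|}+u_1\cdots u_i\,(u_i+1)\,u_i\,u_{i+1}\cdots u_{|u|}\big),$$ $$\mathbf{V}(u)=\sum_{\substack{i\in[|u|]\\ i=|u|\text{ or } u_i>u_{i+1}}}\big(u_1\cdots u_i\,u_i\,u_{i+1}\cdots u_{|u|}+u_1\cdots u_i\,(u_i+1)\,u_i\,u_{i+1}\cdots u_{|u|}\big).$$ $\mathbf{V}^\star$ is the adjoint of $\mathbf{V}$ for the scalar product making the words orthonormal. *)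

(* Defs.v *)
From mathcomp Require Import all_boot all_order all_algebra.
Set Implicit Arguments. Unset Strict Implicit. Unset Printing Implicit Defensive.
Import GRing.Theory.
Local Open Scope ring_scope.

Notation word := (seq nat).

Definition motz (u : word) : bool :=
  [&& u != [::], head 0%N u == 0%N, last 0%N u == 0%N &
      path (fun a b => (a <= b.+1)%N && (b <= a.+1)%N) (head 0%N u) (behead u)].

(* Insertion after (1-based) position i+1, i.e. after the 0-based letter i. *)
Definition ins (u : word) (i : nat) (s : word) : word :=
  take i.+1 u ++ s ++ drop i.+1 u.

Definition ins_pair (u : word) (i : nat) : seq word :=
  [:: ins u i [:: nth 0%N u i]; ins u i [:: (nth 0%N u i).+1; nth 0%N u i]].

(* U(u), as a list of basis words (with multiplicity). *)
Definition Ulist (u : word) : seq word :=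
  flatten [seq ins_pair u i | i <- iota 0 (size u)].

(* V(u): only positions i = |u| or u_i > u_{i+1} (1-based). *)
Definition Vlist (u : word) : seq word :=
  flatten [seq ins_pair u i | i <- iota 0 (size u) &
           (i.+1 == size u) || (nth 0%N u i.+1 < nth 0%N u i)%N].

Fixpoint words (n b : nat) : seq word :=
  if n is k.+1 then [seq x :: s | x <- iota 0 b, s <- words k b] else [:: [::]].

(* All Motzkin words of length at most n (their letters are <= n). *)
Definition motz_upto (n : nat) : seq word :=
  [seq v <- flatten [seq words k n.+1 | k <- iota 1 n] | motz v].

Section Vectors.
Variable K : fieldType.

(* Elements of K<Motz> as formal linear combinations of words. *)
Definition vec := seq (K * word).

Definition coef (x : vec) (w : word) : K :=
  \sum_(p <- x) (if p.2 == w then p.1 else 0).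

Definition lin (f : word -> vec) (x : vec) : vec :=
  flatten [seq [seq (p.1 * q.1, q.2) | q <- f p.2] | p <- x].

Definition Uop (u : word) : vec := [seq (1, w) | w <- Ulist u].
Definition Vop (u : word) : vec := [seq (1, w) | w <- Vlist u].

(* Adjoint of V for the scalar product making words orthonormal:
   V*(u) = sum_{v in Motz} <V v, u> v.  Since V strictly increases length,
   only v with |v| < |u| contribute, so the sum ranges over motz_upto (size u). *)
Definition Vstar (u : word) : vec :=
  [seq (coef (Vop v) u, v) | v <- motz_upto (size u)].

Definition phi (u : word) : vec :=
  [:: (((2 + count (fun i => nth 0%N u i != nth 0%N u i.+1) (iota 0 (size u).-1))%N)%:R, u)].

End Vectors.

(* Main.v *)
Require Import Defs.
From mathcomp Require Import all_boot all_order all_algebra.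
From mathcomp Require Import zify.
Import GRing.Theory.

Definition lt_head (s : word) (a : nat) : bool := if s is b :: _ then (b < a)%N else true.

Fixpoint InsR (u : word) : seq word :=
  if u is a :: s then [:: [:: a, a & s], [:: a, a.+1, a & s] & map (cons a) (InsR s)] else [::].

Fixpoint VinsR (u : word) : seq word :=
  if u is a :: s then (if lt_head s a then [:: [:: a, a & s]; [:: a, a.+1, a & s]] else [::])
                       ++ map (cons a) (VinsR s) else [::].

Definition T0 (a : nat) (s : word) : seq word :=
  if s is b :: r then (if (b == a) && lt_head r a then [:: r] else [::]) else [::].
Definition T1 (a : nat) (s : word) : seq word :=
  if s is b :: r then (if b == a.+1 then T0 a r else [::]) else [::].
Definition Dh a s := T0 a s ++ T1 a s.

Fixpoint DelR (u : word) : seq word :=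
  if u is a :: s then map (cons a) (Dh a s ++ DelR s) else [::].

Definition F u := flatten (map DelR (InsR u)).
Definition G u := flatten (map InsR (DelR u)).

Fixpoint desc (u : word) : nat :=
  if u is a :: s then ((if s is b :: _ then (b < a)%N else false) : nat) + desc s else 0.
Definition phi2 u := (2 + 2 * desc u)%N.

Lemma aSa a : (a == a.+1) = false.
Proof. by apply/eqP; lia. Qed.
Lemma Saa a : (a.+1 == a) = false.
Proof. by apply/eqP; lia. Qed.
Lemma aSSa a : (a == a.+2) = false.
Proof. by apply/eqP; lia. Qed.

Lemma FG1 a : F [:: a] = [:: [:: a]; [:: a]] /\ G [:: a] = [::].
Proof. by rewrite /F /G /= /Dh /= eqxx aSa Saa aSSa /= eqxx. Qed.

Lemma InsR_nil : InsR [::] = [::]. Proof. by []. Qed.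
Lemma InsR_cons a s : InsR (a :: s) = [:: [:: a, a & s], [:: a, a.+1, a & s] & map (cons a) (InsR s)].
Proof. by []. Qed.
Lemma DelR_nil : DelR [::] = [::]. Proof. by []. Qed.
Lemma DelR_cons a s : DelR (a :: s) = map (cons a) (Dh a s ++ DelR s).
Proof. by []. Qed.
Lemma Dh_cons a b y : Dh a (b :: y) =
  (if (b == a) && lt_head y a then [:: y] else [::]) ++ (if b == a.+1 then T0 a y else [::]).
Proof. by []. Qed.
Lemma Dh_nil a : Dh a [::] = [::]. Proof. by []. Qed.
Lemma Dh_aa a s : Dh a (a :: s) = if lt_head s a then [:: s] else [::].
Proof. by rewrite Dh_cons eqxx aSa cats0. Qed.
Lemma Dh_aSa a s : Dh a (a.+1 :: a :: s) = if lt_head s a then [:: s] else [::].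
Proof. by rewrite Dh_cons Saa eqxx /= eqxx. Qed.
Lemma Dh_Sa a s : Dh a.+1 (a :: s) = [::].
Proof. by rewrite Dh_cons aSa aSSa. Qed.

Arguments InsR : simpl never.
Arguments DelR : simpl never.
Arguments VinsR : simpl never.
Arguments Dh : simpl never.

Lemma flat_cat {T : Type} {U : eqType} (f g : T -> seq U) s :
  perm_eq (flatten [seq f x ++ g x | x <- s]) (flatten (map f s) ++ flatten (map g s)).
Proof. apply/permP => p; elim: s => //= x s IH; rewrite !count_cat IH !count_cat; lia. Qed.

Lemma flat_cons_map {T : Type} a (h : T -> seq word) s :
  flatten [seq map (cons a) (h x) | x <- s] = map (cons a) (flatten (map h s)).
Proof. by rewrite map_flatten -map_comp. Qed.

Lemma flat_if_in (T : eqType) (Q : T -> bool) (P : bool) (s : seq T) :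
  (forall y, y \in s -> Q y = P) ->
  flatten [seq if Q y then [:: y] else [::] | y <- s] = if P then s else [::].
Proof.
elim: s => [|y s IH] H /=; first by case: (P).
rewrite H ?mem_head // IH; first by case: (P).
by move=> z Hz; apply: H; rewrite in_cons Hz orbT.
Qed.

Lemma flat_nil_if (T U : Type) (b : bool) (h : T -> seq U) s :
  flatten [seq if b then h y else [::] | y <- s] = if b then flatten (map h s) else [::].
Proof. by case: b; elim: s => //= y s ->. Qed.

Lemma InsR_lt_head a s y : y \in InsR s -> lt_head y a = lt_head s a.
Proof.
case: s => [|c s]; first by rewrite InsR_nil.
by rewrite InsR_cons !in_cons => /or3P [/eqP->|/eqP->|/mapP [t _ ->]].
Qed.

Lemma L0 a r : perm_eq (flatten (map (T0 a) (InsR r))) (flatten (map InsR (T0 a r))).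
Proof.
case: r => [|c r]; first by rewrite InsR_nil.
rewrite InsR_cons /= -map_comp.
rewrite (@eq_map _ _ _ (fun y => if (c == a) && lt_head y a then [:: y] else [::])) //.
rewrite (@flat_if_in _ _ ((c == a) && lt_head r a)); last first.
  by move=> y /(InsR_lt_head a) ->.
have -> : (c == a) && (c < a) = false by case: eqP => // ->; rewrite ltnn.
have -> : (c == a) && (c.+1 < a) = false by case: eqP => // ->; apply/negbTE; lia.
by case: ifP => _ /=; rewrite ?cats0.
Qed.

Lemma Lmain a w : perm_eq (flatten (map (Dh a) (InsR w))) (flatten (map InsR (Dh a w))).
Proof.
case: w => [|b r]; first by rewrite InsR_nil.
rewrite InsR_cons /= -map_comp.
have -> : Dh a [:: b, b & r] = [::].
  rewrite Dh_cons /=; have [->|nba] := eqVneq b a; first by rewrite ltnn aSa.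
  by rewrite /=; case: ifP.
have -> : Dh a [:: b, b.+1, b & r] = [::].
  rewrite Dh_cons /=; have [->|nba] := eqVneq b a; first by rewrite ltnNge leqnSn aSa.
  rewrite /=; have [->|] := eqVneq b a.+1; last by [].
  by rewrite (_ : (a.+2 == a) = false) //; apply/eqP; lia.
rewrite /= (@eq_map _ _ _ (fun y => (if (b == a) && lt_head y a then [:: y] else [::]) ++ (if b == a.+1 then T0 a y else [::]))) //.
apply: (perm_trans (flat_cat (fun y : word => if (b == a) && lt_head y a then [:: y] else [::]) (fun y => if b == a.+1 then T0 a y else [::]) _)).
rewrite (@flat_nil_if _ _ (b == a.+1) (T0 a)) (@flat_if_in _ _ ((b == a) && lt_head r a)); last first.
  by move=> y /(InsR_lt_head a) ->.
rewrite Dh_cons map_cat flatten_cat.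
apply: perm_cat; first by case: ifP => _ //=; rewrite cats0.
case: ifP => _ //; exact: L0.
Qed.
Lemma permC {T : eqType} (p : pred T) {s1 s2 : seq T} : perm_eq s1 s2 -> count p s1 = count p s2.
Proof. by move/permP. Qed.

Lemma F_cons a s : perm_eq (F (a :: s))
  (DelR [:: a, a & s] ++ DelR [:: a, a.+1, a & s] ++
   map (cons a) (flatten (map (Dh a) (InsR s))) ++ map (cons a) (F s)).
Proof.
rewrite /F InsR_cons /= -map_comp.
rewrite (@eq_map _ _ _ (fun x => map (cons a) (Dh a x ++ DelR x))) //.
rewrite flat_cons_map perm_cat2l perm_cat2l.
rewrite -map_cat; apply: perm_map; exact: flat_cat.
Qed.

Lemma flat_pair a L : perm_eq (flatten [seq [:: [:: a, a & v]; [:: a, a.+1, a & v]] | v <- L])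
  (map (cons a) (map (cons a) L) ++ map (cons a) (map (cons a.+1) (map (cons a) L))).
Proof.
apply/permP => p; elim: L => //= v L IH.
rewrite !count_cat /= in IH *; rewrite IH; lia.
Qed.

Lemma G_cons a s : perm_eq (G (a :: s))
  (map (cons a) (map (cons a) (Dh a s ++ DelR s)) ++
   map (cons a) (map (cons a.+1) (map (cons a) (Dh a s ++ DelR s))) ++
   map (cons a) (flatten (map InsR (Dh a s))) ++ map (cons a) (G s)).
Proof.
rewrite /G DelR_cons -map_comp.
rewrite (@eq_map _ _ _ (fun v => [:: [:: a, a & v]; [:: a, a.+1, a & v]] ++ map (cons a) (InsR v))) //.
apply: (perm_trans (flat_cat _ _ _)).
rewrite catA; apply: perm_cat; first exact: flat_pair.
by rewrite flat_cons_map map_cat flatten_cat map_cat.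
Qed.

Lemma FG u : u != [::] -> perm_eq (F u) (G u ++ nseq (phi2 u) u).
Proof.
elim: u => [|a u' IH] // _.
case: u' IH => [|b r] IH.
  by case: (FG1 a) => -> ->.
have {}IH := IH isT.
apply/permP => p.
have E1 := permC p (F_cons a (b :: r)); have E2 := permC p (G_cons a (b :: r)).
rewrite E1 [count _ (G _ ++ _)]count_cat E2.
rewrite (DelR_cons a (a :: b :: r)) (DelR_cons a (b :: r)).
rewrite (DelR_cons a (a.+1 :: a :: b :: r)) (DelR_cons a.+1 (a :: b :: r)) (DelR_cons a (b :: r)).
rewrite Dh_aa Dh_aSa Dh_Sa.
have E3 := permC p (perm_map (cons a) IH); have E4 := permC p (perm_map (cons a) (Lmain a (b :: r))).
move: E4; move: (Dh a (b :: r)) (DelR (b :: r)) => S Dl E4.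
rewrite !count_cat E3 E4 !map_cat !count_cat map_nseq !count_nseq /phi2 /=.
case: (b < a)%N => /=; lia.
Qed.

Lemma shift_pairs a s n (P : pred nat) :
  flatten [seq ins_pair (a :: s) i | i <- [seq i <- iota 1 n | P i]] =
  map (cons a) (flatten [seq ins_pair s i | i <- [seq i <- iota 0 n | P i.+1]]).
Proof.
rewrite (iotaDl 1 0) filter_map -map_comp -flat_cons_map; by congr flatten.
Qed.

Lemma Ulist_InsR u : Ulist u = InsR u.
Proof.
elim: u => [|a s IH] //.
have ft : forall t : seq nat, [seq i <- t | true] = t by elim=> [|x t IHt] //=; rewrite IHt.
have := shift_pairs a s (size s) predT; rewrite !ft => E.
by rewrite /Ulist /= E InsR_cons -IH /ins /= take0 drop0.
Qed.

Lemma Vlist_VinsR u : Vlist u = VinsR u.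
Proof.
elim: u => [|a s IH] //.
have VE : VinsR (a :: s) = (if lt_head s a then [:: [:: a, a & s]; [:: a, a.+1, a & s]] else [::])
                       ++ map (cons a) (VinsR s) by [].
rewrite /Vlist /= (_ : (1 == (size s).+1) || _ = lt_head s a); last by case: s {IH VE}.
rewrite VE -IH; case: (lt_head s a) => /=; rewrite shift_pairs /ins /= ?take0 ?drop0 //.
Qed.

Lemma VinsR_nil : VinsR [::] = [::]. Proof. by []. Qed.
Lemma VinsR_cons a s : VinsR (a :: s) = (if lt_head s a then [:: [:: a, a & s]; [:: a, a.+1, a & s]] else [::])
                       ++ map (cons a) (VinsR s).
Proof. by []. Qed.

Lemma count_cons_map (c y : nat) t (L : seq word) :
  count_mem (y :: t) (map (cons c) L) = ((c == y) * count_mem t L)%N.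
Proof.
elim: L => [|s L IH] /=; first by rewrite muln0.
by rewrite IH eqseq_cons; case: (c == y); rewrite /= ?mul1n ?mul0n.
Qed.

Lemma count_nil_map (c : nat) (L : seq word) : count_mem [::] (map (cons c) L) = 0%N.
Proof. by elim: L. Qed.

Lemma DelR_nilF x : count_mem [::] (DelR x) = 0%N.
Proof. by case: x => [|c x]; rewrite ?DelR_nil ?DelR_cons ?count_nil_map. Qed.

Lemma T0_count a x' w' : count_mem w' (T0 a x') = (lt_head w' a && (x' == a :: w')) :> nat.
Proof.
case: x' => [|b r] /=; first by rewrite andbF.
rewrite eqseq_cons.
have [<-|ne] := eqVneq b a; last by rewrite /= ?(negbTE ne) ?andbF.
rewrite ?eqxx /=.
have [->|ne] := eqVneq r w'; first by case: (lt_head w' b); rewrite /= ?eqxx.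
by case: (lt_head r b); rewrite /= ?andbF //= (negbTE ne).
Qed.

Lemma T1_count a x' w' : count_mem w' (T1 a x') = (lt_head w' a && (x' == [:: a.+1, a & w'])) :> nat.
Proof.
case: x' => [|b r] /=; first by rewrite andbF.
rewrite eqseq_cons.
have [Hb|ne] := eqVneq b a.+1; last by rewrite /= ?(negbTE ne) ?andbF.
by rewrite ?Hb ?eqxx /= T0_count.
Qed.

Lemma count_VD w x : count_mem x (VinsR w) = count_mem w (DelR x).
Proof.
elim: w x => [|a w' IH] x.
  by rewrite VinsR_nil DelR_nilF.
case: x => [|c x'].
  by rewrite VinsR_cons count_cat count_nil_map DelR_nil; case: (lt_head w' a).
rewrite VinsR_cons DelR_cons count_cat !count_cons_map count_cat /Dh count_cat T0_count T1_count IH.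
have [<-|ne] := eqVneq c a.
  rewrite !mul1n; case: (lt_head w' c) => /=; last by [].
  rewrite !eqseq_cons !eqxx /= [x' == _]eq_sym [x' == _]eq_sym; lia.
rewrite !mul0n addn0; case: (lt_head w' a) => //=.
by rewrite !eqseq_cons [a == c]eq_sym (negbTE ne).
Qed.

Notation Rm := (fun a b : nat => (a <= b.+1)%N && (b <= a.+1)%N).

Lemma InsR_props {w x} : x \in InsR w ->
  [/\ (forall c, path Rm c x = path Rm c w), (forall c, last c x = last c w),
      (size w < size x)%N & exists a x' w', x = a :: x' /\ w = a :: w'].
Proof.
elim: w x => [|a s IH] x; first by rewrite InsR_nil.
rewrite InsR_cons !in_cons => /or3P [/eqP->|/eqP->|/mapP [y Hy ->]].
- split => //=; last by exists a, (a :: s), s.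
  by move=> c; rewrite leqnSn.
- split => //=; last by exists a, [:: a.+1, a & s], s.
  by move=> c; rewrite ltnSn (_ : (a <= a.+2)%N = true) //; lia.
- have [P L S _] := IH _ Hy; split => //=; last by exists a, y, s.
  + by move=> c; rewrite P.
Qed.

Lemma InsR_motz {w x} : x \in InsR w -> motz x = motz w.
Proof.
move=> /InsR_props [P L _ [a [x' [w' [Ex Ew]]]]]; subst x w.
have := P a; have := L 0%N; rewrite /motz /= leqnSn /= => -> ->.
by [].
Qed.

Lemma VinsR_InsR w x : x \in VinsR w -> x \in InsR w.
Proof.
elim: w x => [|a w IH] x; first by rewrite VinsR_nil.
rewrite VinsR_cons InsR_cons mem_cat !in_cons => /orP [].
  case: (lt_head w a) => //; rewrite !in_cons orbF => /orP [] ->; by rewrite ?orbT.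
by move=> /mapP [y /IH Hy ->]; rewrite map_f ?orbT.
Qed.

Lemma DelR_motz {x w} : motz x -> w \in DelR x -> motz w /\ (size w < size x)%N.
Proof.
move=> mx wD.
have : x \in VinsR w by rewrite -has_pred1 has_count count_VD -has_count has_pred1.
move=> /VinsR_InsR xI; have [_ _ S _] := InsR_props xI.
by rewrite -(InsR_motz xI).
Qed.

Lemma count_words_nil (X : seq nat) (L : seq word) :
  count_mem [::] (flatten [seq [seq x :: s | s <- L] | x <- X]) = 0%N.
Proof. by elim: X => //= x X IH; rewrite count_cat IH count_nil_map. Qed.

Lemma count_words_cons (X : seq nat) (L : seq word) y t :
  count_mem (y :: t) (flatten [seq [seq x :: s | s <- L] | x <- X]) = (count_mem y X * count_mem t L)%N.
Proof. by elim: X => //= x X IH; rewrite count_cat IH count_cons_map mulnDl. Qed.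

Lemma count_words k b w : count_mem w (words k b) = ((size w == k) && all (fun x => (x < b)%N) w) :> nat.
Proof.
elim: k w => [|k IH] [|y t] //=; first by rewrite count_words_nil.
rewrite count_words_cons IH count_uniq_mem ?iota_uniq // mem_iota /= add0n.
by rewrite eqSS; case: (y < b)%N; case: (size t == k); case: (all _ t).
Qed.

Lemma count_words_flat (K : seq nat) b w :
  count_mem w (flatten [seq words k b | k <- K]) = (count_mem (size w) K * all (fun x => (x < b)%N) w)%N.
Proof.
elim: K => //= k K IH; rewrite count_cat IH count_words mulnDl eq_sym.
by case: (k == size w); case: (all _ w).
Qed.

Lemma count_motz_upto n w : count_mem w (motz_upto n) =
  [&& motz w, (0 < size w <= n)%N & all (fun x => (x < n.+1)%N) w] :> nat.
Proof.
rewrite /motz_upto count_filter.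
case Mw: (motz w) => /=.
  rewrite (@eq_count _ _ (pred1 w)); last by move=> x /=; case: eqP => // ->.
  rewrite count_words_flat count_uniq_mem ?iota_uniq // mem_iota add1n ltnS.
  by case: (_ && _); case: (all _ w).
rewrite (@eq_count _ _ pred0) ?count_pred0 //.
by move=> x /=; case: eqP => // ->; rewrite Mw andbF.
Qed.

Lemma path_bound {c s} : path Rm c s -> all (fun x => (x <= c + size s)%N) s.
Proof.
elim: s c => //= b s IH c /andP [/andP [h1 h2] hp].
apply/andP; split; first by lia.
by move: (IH _ hp); apply: sub_all => x /=; lia.
Qed.

Lemma motz_all w n : motz w -> (size w <= n)%N -> all (fun x => (x < n.+1)%N) w.
Proof.
case: w => [|a s] //; rewrite /motz /= => /and3P [/eqP a0 _ hp] hs; subst a.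
apply/andP; split => //.
by move: (path_bound hp); apply: sub_all => x /=; lia.
Qed.

Lemma count_motz_upto1 n w : motz w -> (size w <= n)%N -> count_mem w (motz_upto n) = 1%N.
Proof.
move=> mw hs; rewrite count_motz_upto mw hs motz_all //.
by case: w mw {hs} => [|a s].
Qed.

Fixpoint chg (u : word) : nat :=
  if u is a :: s then ((if s is b :: _ then a != b else false) : nat) + chg s else 0.
Fixpoint asc (u : word) : nat :=
  if u is a :: s then ((if s is b :: _ then (a < b)%N else false) : nat) + asc s else 0.

Lemma count_chg u : count (fun i => nth 0%N u i != nth 0%N u i.+1) (iota 0 (size u).-1) = chg u.
Proof.
elim: u => [|a s IH] //; case: s IH => [|b s] IH //.
have -> : chg [:: a, b & s] = ((a != b) + chg (b :: s))%N by [].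
by rewrite -IH /= (iotaDl 1 0) count_map.
Qed.

Lemma chg_split u : chg u = (asc u + desc u)%N.
Proof.
elim: u => //= a s ->; case: s => [|b s] //=.
case: (ltngtP a b) => H /=; lia.
Qed.

Lemma asc_desc {c s} : path Rm c s -> (c + asc (c :: s) = last c s + desc (c :: s))%N.
Proof.
elim: s c => [|b s IH] c /=; first by [].
move=> /andP [/andP [h1 h2] hp]; have := IH b hp => /=.
case: (ltngtP c b) => H /=; lia.
Qed.

Lemma phi_count u : motz u ->
  (2 + count (fun i => nth 0%N u i != nth 0%N u i.+1) (iota 0 (size u).-1))%N = phi2 u.
Proof.
case: u => [|a s] //; rewrite /motz /= => /and3P [/eqP a0 /eqP hl hp]; subst a.
rewrite count_chg chg_split /phi2.
have := asc_desc hp; rewrite hl; lia.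
Qed.

Local Open Scope ring_scope.

Section Coefs.
Variable K : fieldType.

Lemma coef_cat (x y : vec K) w : coef (x ++ y) w = coef x w + coef y w.
Proof. by rewrite /coef big_cat. Qed.

Lemma coef_lin (f : word -> vec K) x w : coef (lin f x) w = \sum_(p <- x) p.1 * coef (f p.2) w.
Proof.
elim: x => [|p x IH]; first by rewrite /lin /coef !big_nil.
rewrite big_cons -IH {2}/lin /= coef_cat; congr (_ + _).
rewrite /coef big_map mulr_sumr; apply: eq_bigr => q _ /=.
by case: eqP; rewrite ?mulr0.
Qed.

Lemma sum_ind (S : seq word) (g : word -> K) w :
  \sum_(v <- S) (if v == w then g v else 0) = (count_mem w S)%:R * g w.
Proof.
elim: S => [|v S IH]; first by rewrite big_nil mul0r.
rewrite big_cons IH /= natrD mulrDl.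
by case: eqP => [->|_]; rewrite ?mul1r ?mul0r ?add0r.
Qed.

Lemma coef_ones (s : seq word) w : coef [seq (1, v) | v <- s] w = (count_mem w s)%:R :> K.
Proof. by rewrite /coef big_map (sum_ind s (fun _ => 1)) mulr1. Qed.

Lemma coef_Vstar x w : coef (Vstar K x) w =
  (count_mem w (motz_upto (size x)))%:R * (count_mem x (Vlist w))%:R.
Proof. rewrite /Vstar /coef big_map /= sum_ind; congr (_ * _); exact: coef_ones. Qed.

Lemma sum_count_flat (f : word -> seq word) (s : seq word) w :
  \sum_(x <- s) (count_mem w (f x))%:R = (count_mem w (flatten (map f s)))%:R :> K.
Proof.
elim: s => [|x s IH]; first by rewrite big_nil.
by rewrite big_cons IH /= count_cat natrD.
Qed.

Lemma sum_sel (S D : seq word) (g : word -> K) :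
  (forall v, v \in D -> count_mem v S = 1%N) ->
  \sum_(v <- S) (count_mem v D)%:R * g v = \sum_(v <- D) g v.
Proof.
elim: D => [|d D IH] H.
  by rewrite big_nil big1 // => v _; rewrite mul0r.
rewrite big_cons -IH; last by move=> v Hv; apply: H; rewrite in_cons Hv orbT.
have := H d (mem_head _ _) => Hd.
have -> : \sum_(v <- S) (count_mem v (d :: D))%:R * g v =
    \sum_(v <- S) (if v == d then g v else 0) + \sum_(v <- S) (count_mem v D)%:R * g v.
  rewrite -big_split; apply: eq_bigr => v _ /=; rewrite natrD mulrDl; congr (_ + _).
  by rewrite eq_sym; case: eqP => [->|_]; rewrite ?mul1r ?mul0r.
by rewrite sum_ind Hd mul1r.
Qed.

End Coefs.

Theorem proposition4p9 (K : fieldType) (charK : [pchar K] =i pred0)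
  (u : word) : motz u ->
  forall w : word,
    coef (lin (@Vstar K) (Uop K u)) w - coef (lin (Uop K) (Vstar K u)) w
    = coef (phi K u) w.
Proof.
move=> mu w.
have u0 : u != [::] by case: u mu.
have T1 : coef (lin (@Vstar K) (Uop K u)) w = (count_mem w (F u))%:R.
  rewrite coef_lin /Uop big_map /= Ulist_InsR /F -sum_count_flat.
  rewrite big_seq [RHS]big_seq; apply: eq_bigr => x Hx.
  rewrite mul1r coef_Vstar -natrM Vlist_VinsR count_VD; congr (_%:R).
  case E: (count_mem w (DelR x)) => [|k]; first by rewrite muln0.
  have wD : w \in DelR x by rewrite -has_pred1 has_count E.
  have mx : motz x by rewrite (InsR_motz Hx).
  have [mw sw] := DelR_motz mx wD.
  by rewrite count_motz_upto1 ?mul1n // ltnW.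
have T2 : coef (lin (Uop K) (Vstar K u)) w = (count_mem w (G u))%:R.
  rewrite coef_lin /Vstar big_map /= /G -sum_count_flat.
  rewrite -(@sum_sel K (motz_upto (size u)) (DelR u) (fun v => (count_mem w (InsR v))%:R)); last first.
    move=> v Hv; have [mv sv] := DelR_motz mu Hv.
    by rewrite count_motz_upto1 // ltnW.
  apply: eq_bigr => v _.
  by rewrite !coef_ones Vlist_VinsR Ulist_InsR count_VD.
have P : coef (phi K u) w = ((u == w) * phi2 u)%N%:R.
  rewrite /phi /coef big_cons big_nil addr0 /= phi_count //.
  by case: eqP; rewrite ?mul1n ?mul0n.
have E := permC (pred1 w) (FG u u0).
rewrite T1 T2 P E count_cat count_nseq /=.
by rewrite natrD addrAC subrr add0r.
Qed.
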